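(* Let $A$ be a closed $\forall^+$ type of system $\mathcal F$. Then $A$ is an input type: for every normal $\lambda$-term $t$, if $\vdash_{\mathcal F} t : A$ then $\vdash_{\mathcal F_0} t : A$.
   Context: $\lambda$-terms are those of the untyped $\lambda$-calculus; normal means without $\beta$-redex. Types of system $\mathcal F$: built from type variables with $\rightarrow$, $\forall$; only proper types (in every $\forall XA$, $X$ occurs free in $A$). Typing: (ax) $\Gamma \vdash x_i : A_i$ for $x_i:A_i\in\Gamma$; ($\rightarrow_i$) from $\Gamma, x:B \vdash t : C$ infer $\Gamma \vdash \lambda x t : B \rightarrow C$; ($\rightarrow_e$) from $\Gamma \vdash u : B\rightarrow C$, $\Gamma \vdash v : B$ infer $\Gamma \vdash (u)v : C$; ($\forall_i$) from $\Gamma \vdash t : A$, $X$ not free in $\Gamma$, infer $\Gamma \vdash t : \forall X A$; ($\forall_e$) from $\Gamma \vdash t : \forall X A$ infer $\Gamma \vdash t : A[C/X]$ for any type $C$. $\mathcal F_0$ is $\mathcal F$ without ($\forall_e$). The classes $\forall^+$, $\forall^-$: every type variable is both; if $A$ is $\forall^+$ (resp. $\forall^-$) and $B$ is $\forall^-$ (resp. $\forall^+$) then $B\rightarrow A$ is $\forall^+$ (resp. $\forall^-$); if $A$ is $\forall^+$ and $X$ is free in $A$ then $\forall XA$ is $\forall^+$. *)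

(* Defs.v *)
From Stdlib Require Import Arith List Bool.
Import ListNotations.

Inductive term : Type :=
| Var : nat -> term
| App : term -> term -> term
| Lam : term -> term.

Fixpoint normal (t : term) : Prop :=
  match t with
  | Var _ => True
  | Lam u => normal u
  | App u v =>
      match u with
      | Lam _ => False
      | _ => normal u /\ normal v
      end
  end.

Inductive ty : Type :=
| TVar : nat -> ty
| Arr : ty -> ty -> ty
| All : ty -> ty.

Fixpoint occurs (n : nat) (A : ty) : bool :=
  match A with
  | TVar m => Nat.eqb n m
  | Arr B C => occurs n B || occurs n C
  | All B => occurs (S n) B
  end.

Fixpoint proper (A : ty) : bool :=
  match A with
  | TVar _ => true
  | Arr B C => proper B && proper C
  | All B => occurs 0 B && proper B
  end.

Fixpoint closed_at (k : nat) (A : ty) : bool :=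
  match A with
  | TVar n => Nat.ltb n k
  | Arr B C => closed_at k B && closed_at k C
  | All B => closed_at (S k) B
  end.

Definition closed_ty (A : ty) : bool := closed_at 0 A.

Fixpoint lift (k c : nat) (A : ty) : ty :=
  match A with
  | TVar n => if Nat.ltb n c then TVar n else TVar (n + k)
  | Arr B D => Arr (lift k c B) (lift k c D)
  | All B => All (lift k (S c) B)
  end.

(** [subst c C A] = A[C/X] where X is the variable of index c; variables
    above c are decremented (the binder of X is removed). *)
Fixpoint subst (c : nat) (C : ty) (A : ty) : ty :=
  match A with
  | TVar n =>
      if Nat.eqb n c then lift c 0 C
      else if Nat.ltb c n then TVar (pred n) else TVar n
  | Arr B D => Arr (subst c C B) (subst c C D)
  | All B => All (subst (S c) C B)
  end.

Definition inst (A C : ty) : ty := subst 0 C A.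

(** Shift a context when going under a type binder (X not free in Gamma). *)
Definition shift_ctx (G : list ty) : list ty := map (lift 1 0) G.

Inductive typF : list ty -> term -> ty -> Prop :=
| F_ax : forall G n A, nth_error G n = Some A -> typF G (Var n) A
| F_arr_i : forall G B C t, proper B = true ->
    typF (B :: G) t C -> typF G (Lam t) (Arr B C)
| F_arr_e : forall G B C u v,
    typF G u (Arr B C) -> typF G v B -> typF G (App u v) C
| F_all_i : forall G t A, occurs 0 A = true ->
    typF (shift_ctx G) t A -> typF G t (All A)
| F_all_e : forall G t A C, proper C = true ->
    typF G t (All A) -> typF G t (inst A C).

Inductive typF0 : list ty -> term -> ty -> Prop :=
| F0_ax : forall G n A, nth_error G n = Some A -> typF0 G (Var n) A
| F0_arr_i : forall G B C t, proper B = true ->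
    typF0 (B :: G) t C -> typF0 G (Lam t) (Arr B C)
| F0_arr_e : forall G B C u v,
    typF0 G u (Arr B C) -> typF0 G v B -> typF0 G (App u v) C
| F0_all_i : forall G t A, occurs 0 A = true ->
    typF0 (shift_ctx G) t A -> typF0 G t (All A).

Inductive allpos : ty -> Prop :=
| pos_var : forall n, allpos (TVar n)
| pos_arr : forall B A, allneg B -> allpos A -> allpos (Arr B A)
| pos_all : forall A, allpos A -> occurs 0 A = true -> allpos (All A)
with allneg : ty -> Prop :=
| neg_var : forall n, allneg (TVar n)
| neg_arr : forall B A, allpos B -> allneg A -> allneg (Arr B A).

(* Main.v *)
Require Import Defs.
From Stdlib Require Import List Arith Lia Bool.
Import ListNotations.

Ltac dstr := repeat match goal with
  | |- context [Nat.eqb ?a ?b] => destruct (Nat.eqb_spec a b)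
  | |- context [Nat.ltb ?a ?b] => destruct (Nat.ltb_spec a b)
  end.

Lemma LL : forall C j k d e, e <= d <= e + k -> lift j d (lift k e C) = lift (j + k) e C.
Proof.
  induction C; intros j k d e H; simpl.
  - dstr; simpl; dstr; f_equal; lia.
  - rewrite IHC1, IHC2; auto.
  - rewrite IHC; auto; lia.
Qed.

Lemma S1 : forall C B c d, d <= c -> subst (S c) C (lift 1 d B) = lift 1 d (subst c C B).
Proof.
  intros C B; induction B; intros c d H; simpl.
  - destruct (Nat.ltb_spec n d); simpl.
    + dstr; simpl; dstr; try lia; reflexivity.
    + destruct (Nat.eqb_spec (n+1) (S c)).
      * assert (n = c) by lia; subst. rewrite Nat.eqb_refl. rewrite LL by lia. reflexivity.
      * destruct (Nat.eqb_spec n c); [lia|].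
        dstr; simpl; dstr; try lia; f_equal; lia.
  - rewrite IHB1, IHB2; auto.
  - rewrite IHB; auto; lia.
Qed.

Lemma S2 : forall C B c, subst c C (lift 1 c B) = B.
Proof.
  intros C B; induction B; intros c; simpl.
  - dstr; simpl; dstr; try lia; f_equal; lia.
  - rewrite IHB1, IHB2; auto.
  - rewrite IHB; auto.
Qed.

Lemma L1 : forall B n k c, c <= n < c + k -> occurs n (lift k c B) = false.
Proof.
  induction B; intros m k c H; simpl.
  - dstr; simpl; apply Nat.eqb_neq; lia.
  - rewrite IHB1, IHB2; auto.
  - apply IHB; lia.
Qed.

Lemma L2 : forall B n k c, n < c -> occurs n (lift k c B) = occurs n B.
Proof.
  induction B; intros m k c H; simpl.
  - dstr; simpl; auto; symmetry; dstr; try lia; apply Nat.eqb_neq; lia.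
  - rewrite IHB1, IHB2; auto.
  - apply IHB; lia.
Qed.

Lemma L3 : forall C B n c, n < c -> occurs n (subst c C B) = occurs n B.
Proof.
  intros C; induction B; intros m c H; simpl.
  - destruct (Nat.eqb_spec n c).
    + subst; rewrite L1 by lia. symmetry; apply Nat.eqb_neq; lia.
    + destruct (Nat.ltb_spec c n); simpl; auto.
      destruct (Nat.eqb_spec m (pred n)), (Nat.eqb_spec m n); lia.
  - rewrite IHB1, IHB2; auto.
  - apply IHB; lia.
Qed.

Lemma PL : forall A k c, proper (lift k c A) = proper A.
Proof.
  induction A; intros k c; simpl.
  - dstr; auto.
  - rewrite IHA1, IHA2; auto.
  - rewrite IHA, L2 by lia; auto.
Qed.

Lemma PS : forall C A c, proper A = true -> proper C = true -> proper (subst c C A) = true.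
Proof.
  intros C; induction A; intros c HA HC; simpl in *.
  - dstr; simpl; auto. rewrite PL; auto.
  - apply andb_true_iff in HA as [H1 H2]. rewrite IHA1, IHA2; auto.
  - apply andb_true_iff in HA as [H1 H2]. rewrite L3 by lia. rewrite IHA by auto. rewrite H1; auto.
Qed.

Lemma P : forall C A c, (allpos (subst c C A) -> allpos A) /\ (allneg (subst c C A) -> allneg A).
Proof.
  intros C; induction A; intros c; simpl.
  - split; intros; constructor.
  - destruct (IHA1 c), (IHA2 c); split; intro H'; inversion H'; subst; constructor; auto.
  - destruct (IHA (S c)). split; intro H'; inversion H'; subst.
    constructor; auto. rewrite L3 in H3 by lia; auto.
Qed.

Lemma NL : forall A k c, (allpos A -> allpos (lift k c A)) /\ (allneg A -> allneg (lift k c A)).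
Proof.
  induction A; intros k c; simpl.
  - split; intros; dstr; constructor.
  - destruct (IHA1 k c), (IHA2 k c); split; intro H'; inversion H'; subst; constructor; auto.
  - destruct (IHA k (S c)). split; intro H'; inversion H'; subst.
    constructor; auto. rewrite L2 by lia; auto.
Qed.

Lemma map_shift : forall C c G,
  map (subst (S c) C) (shift_ctx G) = shift_ctx (map (subst c C) G).
Proof.
  intros; unfold shift_ctx; rewrite !map_map; apply map_ext; intros; apply S1; lia.
Qed.

Lemma F0_subst : forall G t A, typF0 G t A -> forall C c, proper C = true ->
  typF0 (map (subst c C) G) t (subst c C A).
Proof.
  induction 1; intros D c HD; simpl.
  - constructor. apply map_nth_error; auto.
  - constructor. apply PS; auto. apply (IHtypF0 D c HD).
  - econstructor; [apply (IHtypF0_1 D c HD)| apply (IHtypF0_2 D c HD)].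
  - constructor. rewrite L3 by lia; auto.
    rewrite <- map_shift. apply IHtypF0; auto.
Qed.

Lemma PF : forall G t A, typF G t A -> Forall (fun B => proper B = true) G -> proper A = true.
Proof.
  induction 1; intros HG; simpl.
  - eapply Forall_forall in HG; eauto. eapply nth_error_In; eauto.
  - rewrite H, IHtypF; auto.
  - specialize (IHtypF1 HG); simpl in IHtypF1. apply andb_true_iff in IHtypF1; tauto.
  - rewrite H, IHtypF; auto. unfold shift_ctx. apply Forall_map.
    eapply Forall_impl; [|exact HG]. intros; simpl; rewrite PL; auto.
  - specialize (IHtypF HG); simpl in IHtypF. apply andb_true_iff in IHtypF as [_ H1].
    apply PS; auto.
Qed.

Definition neutral (t : term) : Prop := match t with Lam _ => False | _ => True end.

Lemma main : forall G t A, typF G t A -> Forall allneg G ->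
  Forall (fun B => proper B = true) G -> normal t ->
  (allpos A -> typF0 G t A) /\
  (neutral t -> allneg A /\ typF0 G t A /\
     (forall n, occurs n A = true -> exists B, In B G /\ occurs n B = true)).
Proof.
  induction 1; intros HN HP Hn.
  - assert (In A G) by (eapply nth_error_In; eauto).
    split; [intros; constructor; auto|].
    intros _; split; [eapply Forall_forall; eauto|]. split; [constructor; auto|].
    intros; exists A; auto.
  - split; [|simpl; tauto].
    intros Hp; inversion Hp; subst. constructor; auto.
    refine (proj1 (IHtypF _ _ _) _); auto; constructor; auto.
  - simpl in Hn. destruct u as [| |]; try contradiction;
    destruct Hn as [Hu Hv];
    (destruct (IHtypF1 HN HP Hu) as [_ Hneu];
     destruct (Hneu I) as [HnegA [Hu0 Hocc]];
     inversion HnegA; subst;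
     destruct (IHtypF2 HN HP Hv) as [Hv0 _];
     assert (typF0 G (App _ v) C) by (eapply F0_arr_e; [exact Hu0 | apply Hv0; exact H3]);
     split; [auto|]; intros _; split; [auto|]; split; [auto|];
     intros m Hm; apply Hocc; simpl; rewrite Hm, orb_true_r; auto).
  - assert (HN' : Forall allneg (shift_ctx G)).
    { unfold shift_ctx; apply Forall_map. eapply Forall_impl; [|exact HN].
      intros; apply NL; auto. }
    assert (HP' : Forall (fun B => proper B = true) (shift_ctx G)).
    { unfold shift_ctx; apply Forall_map. eapply Forall_impl; [|exact HP].
      intros; simpl; rewrite PL; auto. }
    destruct (IHtypF HN' HP' Hn) as [Hpos Hneu]. split.
    + intros Hp; inversion Hp; subst. constructor; auto.
    + intros Ht. destruct (Hneu Ht) as [_ [_ Hocc]].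
      destruct (Hocc 0 H) as [B [HB HB0]].
      unfold shift_ctx in HB. apply in_map_iff in HB as [B0 [<- _]].
      rewrite L1 in HB0 by lia. discriminate.
  - destruct (IHtypF HN HP Hn) as [Hpos Hneu].
    destruct t as [| |u].
    + destruct (Hneu I) as [Hneg _]; inversion Hneg.
    + destruct (Hneu I) as [Hneg _]; inversion Hneg.
    + split; [|simpl; tauto]. intros Hp.
      assert (HA : allpos (All A)).
      { constructor. apply (P C A 0); auto.
        pose proof (PF _ _ _ H0 HP) as HPA; simpl in HPA.
        apply andb_true_iff in HPA; tauto. }
      specialize (Hpos HA). inversion Hpos; subst.
      pose proof (F0_subst _ _ _ H5 C 0 H) as Hs.
      unfold shift_ctx in Hs. rewrite map_map in Hs.
      rewrite (map_ext _ (fun x => x)) in Hs by (intros; apply S2).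
      rewrite map_id in Hs. exact Hs.
Qed.

Theorem theorem2p2p3 (A : ty) :
  proper A = true -> closed_ty A = true -> allpos A ->
  forall t : term, normal t -> typF [] t A -> typF0 [] t A.
Proof.
  intros _ _ HA t Hn Ht. exact (proj1 (main _ _ _ Ht (Forall_nil _) (Forall_nil _) Hn) HA).
Qed.
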